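(* Every $\mathcal C$-pair is an augmentation of a basic $\mathcal C$-pair along an acceptable matching.
   Context: $\mathcal C$ is the class of $(P_4,C_4,2P_3)$-free graphs. For a $(P_4,C_4)$-free graph $H$ define a rooted forest $T(H)$ whose nodes are cliques partitioning $V(H)$: if $H$ is disconnected, $T(H)$ is the union of the trees of its components; if $H$ is connected and a clique, $T(H)$ is the single node $V(H)$; otherwise the set $U(H)$ of universal vertices of $H$ is non-empty, and $T(H)$ has root $U(H)$ whose children are the roots of $T(H_1),\dots,T(H_k)$ where $H_1,\dots,H_k$ are the components of $H\setminus U(H)$. A vertex $y$ is a descendant of $x$ if the node containing $y$ is a proper descendant of the node containing $x$. A member $H$ of $\mathcal C$ is basic if every node of $T(H)$ has size 1. A graph $G$ is a $\mathcal C$-pair if $G$ is $P_6$-free and chordal and $V(G)$ is partitioned into sets $X,A$ such that $A$ is a clique, $G[X]\in\mathcal C$, every vertex of $X$ has a neighbor in $A$, and any two non-adjacent vertices of $X$ have no common neighbor in $A$. $G$ is a basic $\mathcal C$-pair if $V(G)=X\cup A$ where $G[X]$ is a basic member of $\mathcal C$ with vertices $x_1,\dots,x_k$, $A=\{a_0,a_1,\dots,a_k\}$ is a clique, and for each $i$: if $x_i$ is simplicial in $G[X]$ then $N_A(x_i)=\{a_i\}$, and otherwise $N_A(x_i)$ is $\{a_i\}$ together with the union of $N_A(y)$ over all descendants $y$ of $x_i$ in $T(G[X])$. In a basic $\mathcal C$-pair a matching $M$ is acceptable if there is a clique $\{x_{i_1},\dots,x_{i_h}\}$ of $G[X]$ with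 $M=\{x_{i_1}a_{i_1},\dots,x_{i_h}a_{i_h}\}$. Two disjoint sets $P,R$ form a graded pair if for any $p,p'\in P$, $N(p)\cap R\subseteq N(p')\cap R$ or $N(p')\cap R\subseteq N(p)\cap R$. Given a graph $H$ and a matching $M$ of $H$, an augmentation of $H$ along $M$ is any graph whose vertex set is partitioned into $|V(H)|$ cliques $Q_v$ ($v\in V(H)$) such that $Q_u$ is complete to $Q_v$ if $uv\in E(H)\setminus M$, there are no edges between $Q_u$ and $Q_v$ if $uv\notin E(H)$, and $\{Q_u,Q_v\}$ is a graded pair if $uv\in M$. *)

(* Defs.v *)
(* Finite simple graphs are symmetric irreflexive relations
   e : rel V on a finType V; induced subgraphs G[S] are given by S : {set V}. *)
From HB Require Import structures.
From mathcomp Require Import all_boot.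
Set Implicit Arguments. Unset Strict Implicit. Unset Printing Implicit Defensive.

Section Graphs.
Variable V : finType.
Implicit Types (e : rel V) (S : {set V}).

Definition restr e S : rel V := fun u v => [&& u \in S, v \in S & e u v].
(* vertex set of the component of G[S] containing x (empty if x \notin S) *)
Definition comp e S (x : V) : {set V} := [set y in S | connect (restr e S) x y].
Definition is_clique e S : bool :=
  [forall u in S, [forall v in S, (u != v) ==> e u v]].
Definition univ e S : {set V} := [set u in S | [forall v in S, (v != u) ==> e u v]].

(* descendant relation of T(G[S]) on vertices (fuel-based recursion) *)
Fixpoint tdesc_f e (n : nat) S (x y : V) : bool :=
  if n is n'.+1 then
    let C := comp e S x in
    let U := univ e C in
    [&& x \in S, y \in C, ~~ is_clique e C &
        ((x \in U) && (y \notin U))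
        || [&& x \notin U, y \notin U & tdesc_f e n' (C :\: U) x y]]
  else false.
Definition tdesc e S (x y : V) : bool := tdesc_f e #|S| S x y.

(* the node of T(G[S]) containing x *)
Fixpoint tnode_f e (n : nat) S (x : V) : {set V} :=
  if n is n'.+1 then
    let C := comp e S x in
    if is_clique e C then C else
    let U := univ e C in
    if x \in U then U else tnode_f e n' (C :\: U) x
  else set0.
Definition tnode e S (x : V) : {set V} := tnode_f e #|S| S x.

Definition induced_in {n : nat} (F : rel 'I_n) e S : Prop :=
  exists f : 'I_n -> V,
    [/\ injective f, (forall i, f i \in S) & (forall i j, e (f i) (f j) = F i j)].
Definition free {n : nat} (F : rel 'I_n) e S : Prop := ~ induced_in F e S.

Definition simplicial e S (x : V) : bool := is_clique e [set y in S | e x y].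

Definition graded e (P R : {set V}) : Prop :=
  forall p p', p \in P -> p' \in P ->
    [set r in R | e p r] \subset [set r in R | e p' r]
    \/ [set r in R | e p' r] \subset [set r in R | e p r].
End Graphs.

Definition path_rel (n : nat) : rel 'I_n :=
  fun i j => (i.+1 == j :> nat) || (j.+1 == i :> nat).
Definition cycle_rel (n : nat) : rel 'I_n :=
  fun i j => [|| path_rel i j,
                 (i == 0 :> nat) && (j == n.-1 :> nat)
               | (j == 0 :> nat) && (i == n.-1 :> nat)].
(* 2P3 : vertices 0-1-2 and 3-4-5 *)
Definition twoP3_rel : rel 'I_6 :=
  fun i j => path_rel i j &&
             ~~ (((i == 2 :> nat) && (j == 3 :> nat)) || ((i == 3 :> nat) && (j == 2 :> nat))).

Section Pairs.
Variable V : finType.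
Implicit Types (e : rel V) (S : {set V}).

Definition inC e S : Prop :=
  [/\ free (@path_rel 4) e S, free (@cycle_rel 4) e S & free twoP3_rel e S].
Definition basic_member e S : Prop :=
  inC e S /\ (forall x, x \in S -> #|tnode e S x| = 1).
Definition P6free e : Prop := free (@path_rel 6) e setT.
Definition chordal e : Prop := forall n, 4 <= n -> free (@cycle_rel n) e setT.

Definition is_graph e : Prop := symmetric e /\ irreflexive e.

Definition C_pair e (X A : {set V}) : Prop :=
  [/\ [/\ A = ~: X, is_clique e A & inC e X],
      (forall x, x \in X -> exists2 a, a \in A & e x a),
      (forall x y, x \in X -> y \in X -> x != y -> ~~ e x y ->
         forall a, a \in A -> ~~ (e x a && e y a)),
      P6free e & chordal e].
End Pairs.

(* H = (W, eH) is a basic C-pair with X = {xs i}, A = {a0} U {as_ i},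
   where xs i plays x_{i+1} and as_ i plays a_{i+1}. *)
Definition basic_C_pair (W : finType) (eH : rel W) (k : nat)
    (xs : 'I_k -> W) (a0 : W) (as_ : 'I_k -> W) : Prop :=
  let X := [set xs i | i : 'I_k] in
  let A := a0 |: [set as_ i | i : 'I_k] in
  [/\ is_graph eH /\ (forall w, w \in X :|: A),
      [/\ injective xs, injective as_, (forall i j, xs i != as_ j),
          (forall i, xs i != a0) & (forall i, as_ i != a0)],
      basic_member eH X,
      is_clique eH A &
      (forall i, [set b in A | eH (xs i) b] =
         if simplicial eH X (xs i) then [set as_ i]
         else as_ i |: \bigcup_(j | tdesc eH X (xs i) (xs j)) [set b in A | eH (xs j) b])].

Definition match_rel (W : finType) (k : nat) (xs as_ : 'I_k -> W) (I : {set 'I_k}) : rel W :=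
  fun u v => [exists i in I, ((u == xs i) && (v == as_ i)) || ((v == xs i) && (u == as_ i))].

Definition acceptable (W : finType) (eH : rel W) (k : nat) (xs : 'I_k -> W) (I : {set 'I_k}) : bool :=
  is_clique eH [set xs i | i in I].

(* G = (V, e) is an augmentation of H = (W, eH) along the matching M, via the
   partition of V into the cliques Q_w = q^-1(w) (possibly empty). *)
Definition augmentation (V W : finType) (e : rel V) (eH : rel W) (M : rel W) (q : V -> W) : Prop :=
  [/\ (forall u v, u != v -> q u = q v -> e u v),
      (forall u v, q u != q v -> eH (q u) (q v) -> ~~ M (q u) (q v) -> e u v),
      (forall u v, q u != q v -> ~~ eH (q u) (q v) -> ~~ e u v) &
      (forall u' v', M u' v' -> graded e [set v | q v == u'] [set v | q v == v'])].

(* Main.v *)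
Require Import Defs.
From HB Require Import structures.
From mathcomp Require Import all_boot.
Require Import Defs.
Set Implicit Arguments. Unset Strict Implicit. Unset Printing Implicit Defensive.

Ltac inj_tac :=
  let i := fresh "i" in let j := fresh "j" in let E := fresh "E" in
  move=> i j; case: i => [[|[|[|[|[|[|[|ki]]]]]]] Hi] //; case: j => [[|[|[|[|[|[|[|kj]]]]]]] Hj] //= E;
  try (by apply: val_inj); exfalso; subst;
  match goal with
  | H : is_true (?a != ?a) |- _ => by rewrite eqxx in H
  | Hr : irreflexive ?e, H : is_true (?e ?a ?a) |- _ => by rewrite Hr in H
  end.

Ltac edge_tac :=
  let i := fresh "i" in let j := fresh "j" in
  move=> i j;
  case: i => [[|[|[|[|[|[|[|ki]]]]]]] Hi] //; case: j => [[|[|[|[|[|[|[|kj]]]]]]] Hj] //; rewrite /twoP3_rel /cycle_rel /path_rel /= ?eqE /=;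
  match goal with
  | Hi : irreflexive ?e |- ?e ?a ?a = _ => by rewrite Hi
  | H : is_true (?e ?a ?b) |- ?e ?a ?b = true => exact H
  | Hs : symmetric ?e, H : is_true (?e ?b ?a) |- ?e ?a ?b = true => by rewrite Hs
  | H : is_true (~~ ?e ?a ?b) |- ?e ?a ?b = false => exact: negbTE H
  | Hs : symmetric ?e, H : is_true (~~ ?e ?b ?a) |- ?e ?a ?b = false => by rewrite Hs (negbTE H)
  end.

Section Gen.
Variable T : finType.
Variable r : rel T.
Hypothesis rsym : symmetric r.
Hypothesis rirr : irreflexive r.
Implicit Types (S U : {set T}) (x y z u v : T).

Definition nbr (S : {set T}) x : {set T} := [set y in S | (y == x) || r x y].
Definition TP (S : {set T}) := forall x y, x \in S -> y \in S -> r x y ->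
  nbr S x \subset nbr S y \/ nbr S y \subset nbr S x.

Lemma in_nbr S x y : (y \in nbr S x) = (y \in S) && ((y == x) || r x y).
Proof. by rewrite inE. Qed.

Lemma nbr_self S x : x \in S -> x \in nbr S x.
Proof. by move=> xS; rewrite in_nbr xS eqxx. Qed.

Lemma nbr_sub S x : nbr S x \subset S.
Proof. by apply/subsetP=> y; rewrite in_nbr => /andP[]. Qed.

Lemma nbr_sym S x y : x \in S -> y \in S -> (y \in nbr S x) = (x \in nbr S y).
Proof. by move=> xS yS; rewrite !in_nbr xS yS eq_sym rsym. Qed.

Lemma nbr_restr S S' x : S' \subset S -> nbr S' x = nbr S x :&: S'.
Proof.
move=> sub; apply/setP=> y; rewrite in_setI !in_nbr.
case yS': (y \in S'); last by rewrite !andbF.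
by rewrite (subsetP sub _ yS') andbT.
Qed.

Lemma TP_sub S S' : S' \subset S -> TP S -> TP S'.
Proof.
move=> sub tp x y xS yS rxy.
rewrite !(nbr_restr x sub) !(nbr_restr y sub).
case: (tp x y (subsetP sub _ xS) (subsetP sub _ yS) rxy) => h; [left|right];
  exact: setSI.
Qed.

Lemma edge_out (rr : rel T) (P : pred T) x y : connect rr x y -> P x -> ~~ P y ->
  exists u v, [/\ P u, ~~ P v & rr u v].
Proof.
move/connectP=> [p]; elim: p x => [|z p IH] x /=.
  by move=> _ -> ->.
case/andP=> rxz pz ylast Px nPy.
case Pz: (P z); first exact: (IH z pz ylast Pz nPy).
by exists x, z; rewrite Pz.
Qed.

Lemma restr_sym S : symmetric (restr r S).
Proof. by move=> u v; rewrite /restr andbCA rsym. Qed.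

Lemma in_comp S x y : (y \in comp r S x) = (y \in S) && connect (restr r S) x y.
Proof. by rewrite inE. Qed.

Lemma comp_sub S x : comp r S x \subset S.
Proof. by apply/subsetP=> y; rewrite in_comp => /andP[]. Qed.

Lemma comp_self S x : x \in S -> x \in comp r S x.
Proof. by move=> xS; rewrite in_comp xS connect0. Qed.

Lemma comp_closed S x u v : u \in comp r S x -> v \in S -> r u v -> v \in comp r S x.
Proof.
rewrite !in_comp => /andP[uS cu] vS ruv; rewrite vS /=.
apply: connect_trans cu (connect1 _).
by rewrite /restr uS vS ruv.
Qed.

Lemma comp_conn S x u v : u \in comp r S x -> v \in comp r S x ->
  connect (restr r S) u v.
Proof.
rewrite !in_comp => /andP[_ cu] /andP[_ cv].
apply: connect_trans _ cv.
by rewrite (sym_connect_sym (@restr_sym S)).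
Qed.

Lemma nbr_comp S x v : v \in comp r S x -> nbr S v = nbr (comp r S x) v.
Proof.
move=> vC; apply/setP=> y; rewrite !in_nbr.
case: (boolP (y == v)) => [/eqP->|nyv] /=.
  by rewrite vC (subsetP (comp_sub S x) _ vC).
case yS: (y \in S) => /=; last first.
  by case yC: (y \in comp r S x) => //; rewrite (subsetP (comp_sub S x) _ yC) in yS.
case rvy: (r v y); last by rewrite andbF.
by rewrite (comp_closed vC yS rvy).
Qed.

Lemma univ_nbr S v : (v \in univ r S) = (v \in S) && (nbr S v == S).
Proof.
rewrite inE; case vS: (v \in S) => //=.
apply/forallP/eqP => [h|h].
  apply/setP=> y; rewrite in_nbr.
  case yS: (y \in S) => //=.
  by case: eqP => //= /eqP nyv; move: (h y); rewrite yS nyv.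
move=> y; apply/implyP=> yS; apply/implyP=> nyv.
by move: yS; rewrite -h in_nbr => /andP[_]; rewrite (negbTE nyv).
Qed.

Lemma univ_sub_nbr S u v : u \in univ r S -> v \in S -> u \in nbr S v.
Proof.
rewrite inE => /andP[uS /forallP h] vS.
rewrite in_nbr uS /=; case: eqP => //= /eqP nuv.
by move: (h v); rewrite vS eq_sym nuv rsym.
Qed.

Lemma univ_ex S x : TP S -> x \in S ->
  exists2 u, u \in comp r S x & forall v, v \in comp r S x -> v != u -> r u v.
Proof.
move=> tp xS; set C := comp r S x.
have xC : x \in C by exact: comp_self.
case: (@arg_maxnP _ x (mem C) (fun u => #|nbr S u|) xC) => u uC umax.
exists u => // v vC nvu; apply/negPn/negP => nruv.
have nv : v \notin nbr S u by rewrite in_nbr (negbTE nvu) (negbTE nruv) andbF.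
have uu : u \in nbr S u by rewrite nbr_self // (subsetP (comp_sub S x) _ uC).
have [a [b [/= aN /= bN rab]]] := edge_out (P := fun w => w \in nbr S u) (comp_conn uC vC) uu nv.
move: rab; rewrite /restr => /and3P[aS bS rab].
have nau : a != u by apply: contraNneq bN => <-; rewrite in_nbr bS rab orbT.
have rua : r u a by move: aN; rewrite in_nbr aS (negbTE nau).
have aC : a \in C by exact: comp_closed uC aS rua.
have bNa : b \in nbr S a by rewrite in_nbr bS rab orbT.
case: (tp u a (subsetP (comp_sub S x) _ uC) aS rua) => sub.
  have pr : nbr S u \proper nbr S a by apply/properP; split => //; exists b.
  by have := umax a aC; rewrite /geq /= leqNgt (proper_card pr).
by move: bN; rewrite (subsetP sub _ bNa).
Qed.

Lemma properD_same (A B U : {set T}) : U \subset A -> U \subset B ->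
  (A :\: U \proper B :\: U) = (A \proper B).
Proof.
move=> UA UB.
have key : forall A B : {set T}, U \subset B -> (A :\: U \subset B :\: U) = (A \subset B).
  move=> A' B' UB'; apply/idP/idP => h; last exact: setSD.
  apply/subsetP=> y yA; case yU: (y \in U); first exact: (subsetP UB').
  by move: (subsetP h y); rewrite !inE yU yA /= => /(_ isT).
by rewrite !properE !key.
Qed.

Lemma eqD_same (A B U : {set T}) : U \subset A -> U \subset B ->
  (A :\: U == B :\: U) = (A == B).
Proof.
move=> UA UB.
have key : forall A B : {set T}, U \subset B -> (A :\: U \subset B :\: U) = (A \subset B).
  move=> A' B' UB'; apply/idP/idP => h; last exact: setSD.
  apply/subsetP=> y yA; case yU: (y \in U); first exact: (subsetP UB').
  by move: (subsetP h y); rewrite !inE yU yA /= => /(_ isT).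
by rewrite !eqEsubset !key.
Qed.

Lemma nbrD S U v : nbr (S :\: U) v = nbr S v :\: U.
Proof. by apply/setP=> y; rewrite !inE; case: (y \in U). Qed.

Lemma clique_nbr S v : is_clique r S -> v \in S -> nbr S v = S.
Proof.
move=> /forallP cl vS; apply/setP=> y; rewrite in_nbr.
case yS: (y \in S) => //=; case: eqP => //= /eqP nyv.
by move/implyP: (cl v) => /(_ vS) /forallP /(_ y) /implyP /(_ yS) /implyP; apply; rewrite eq_sym.
Qed.

Lemma tdesc_fE n S x y : #|S| <= n -> TP S ->
  tdesc_f r n S x y = [&& x \in S, y \in S, r x y & nbr S y \proper nbr S x].
Proof.
elim: n S => [|n IH] S cS tp.
  have -> : S = set0 by apply/eqP; rewrite -cards_eq0 -leqn0.
  by rewrite inE.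
rewrite /=; case xS: (x \in S) => //=.
set C := comp r S x.
have xC : x \in C by exact: comp_self.
have CS := comp_sub S x.
have yCE : forall (yS : y \in S), r x y -> y \in C.
  by move=> yS rxy; exact: comp_closed xC yS rxy.
case: (boolP (is_clique r C)) => cl /=.
  rewrite andbF; apply/esym/negP => /and3P[yS rxy].
  rewrite (nbr_comp (yCE yS rxy)) (nbr_comp xC) !clique_nbr // ?yCE //.
  by rewrite properE subxx.
set U := univ r C.
have [u uC uU] := univ_ex tp xS.
have uinU : u \in U.
  rewrite inE uC; apply/forallP=> v; apply/implyP=> vC; apply/implyP=> nvu.
  exact: uU.
have UC : U \subset C by apply/subsetP=> w; rewrite inE => /andP[].
have UN : forall v, v \in C -> U \subset nbr C v.
  by move=> v vC; apply/subsetP=> w wU; exact: univ_sub_nbr.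
have cD : #|C :\: U| <= n.
  have : #|C :\: U| < #|C|.
    apply: proper_card; apply/properP; split; first exact: subsetDl.
    by exists u => //; rewrite inE uinU.
  move=> h; rewrite -ltnS; exact: leq_trans h (leq_trans (subset_leq_card CS) cS).
rewrite IH //; last by apply: TP_sub tp; apply: subset_trans (subsetDl _ _) CS.
have NC : forall v, v \in C -> (v \in U) = (nbr C v == C).
  by move=> v vC; rewrite univ_nbr vC.
have NCs : forall v, nbr C v \subset C by move=> v; exact: nbr_sub.
case yC: (y \in C); last first.
  apply/esym/negP => /and3P[yS rxy _]; by rewrite yCE in yC.
have yS := subsetP CS _ yC.
rewrite yS /= (nbr_comp yC) (nbr_comp xC) -/C !nbrD !in_setD xC yC !andbT properD_same ?UN //.
case: (boolP (x \in U)) => xU; case: (boolP (y \in U)) => yU /=.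
- apply/esym/negP => /andP[_]; move: xU yU; rewrite !NC // => /eqP-> /eqP->.
  by rewrite properE subxx.
- have nyx : y != x by apply: contraNneq yU => ->.
  have rxy : r x y.
    by move: (univ_sub_nbr xU yC); rewrite in_nbr xC eq_sym (negbTE nyx) /= rsym.
  rewrite rxy /=; move: xU; rewrite NC // => /eqP->.
  by rewrite properEneq NCs andbT -(NC y yC) yU.
- apply/esym/negP => /andP[_]; move: yU; rewrite NC // => /eqP->.
  by rewrite properE NCs andbF.
- by [].
Qed.

Lemma tdescE S x y : TP S ->
  tdesc r S x y = [&& x \in S, y \in S, r x y & nbr S y \proper nbr S x].
Proof. by move=> tp; rewrite /tdesc tdesc_fE. Qed.

Lemma tnode_f1 n S x : #|S| <= n -> TP S -> x \in S ->
  (forall y z, y \in S -> z \in S -> nbr S y = nbr S z -> y = z) ->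
  tnode_f r n S x = [set x].
Proof.
elim: n S => [|n IH] S cS tp xS tw.
  by move: cS; rewrite leqn0 cards_eq0 => /eqP S0; rewrite S0 inE in xS.
rewrite /=.
set C := comp r S x.
have xC : x \in C by exact: comp_self.
have CS := comp_sub S x.
have twC : forall y, y \in C -> nbr C y = nbr C x -> y = x.
  move=> y yC h; apply: tw; [exact: (subsetP CS)| exact: (subsetP CS)|].
  by rewrite (nbr_comp yC) (nbr_comp xC).
case: (boolP (is_clique r C)) => cl.
  apply/setP=> y; rewrite inE; apply/idP/eqP => [yC|->//].
  by apply: twC => //; rewrite !clique_nbr.
set U := univ r C.
have NC : forall v, v \in C -> (v \in U) = (nbr C v == C).
  by move=> v vC; rewrite univ_nbr vC.
have UC : U \subset C by apply/subsetP=> w; rewrite inE => /andP[].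
case: (boolP (x \in U)) => xU.
  apply/setP=> y; rewrite inE; apply/idP/eqP => [yU|->//].
  have yC := subsetP UC _ yU.
  by apply: twC => //; move: xU yU; rewrite !NC // => /eqP-> /eqP->.
have [u uC uU] := univ_ex tp xS.
have uinU : u \in U.
  rewrite inE uC; apply/forallP=> v; apply/implyP=> vC; apply/implyP=> nvu.
  exact: uU.
have UN : forall v, v \in C -> U \subset nbr C v.
  by move=> v vC; apply/subsetP=> w wU; exact: univ_sub_nbr.
have cD : #|C :\: U| <= n.
  have : #|C :\: U| < #|C|.
    apply: proper_card; apply/properP; split; first exact: subsetDl.
    by exists u => //; rewrite inE uinU.
  move=> h; rewrite -ltnS; exact: leq_trans h (leq_trans (subset_leq_card CS) cS).
apply: IH => //.
- by apply: TP_sub tp; apply: subset_trans (subsetDl _ _) CS.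
- by rewrite in_setD xU xC.
- move=> y z; rewrite !in_setD => /andP[yU yC] /andP[zU zC].
  rewrite !nbrD => /eqP; rewrite eqD_same ?UN // => /eqP h.
  apply: tw; [exact: subsetP CS _ yC | exact: subsetP CS _ zC |].
  by rewrite (nbr_comp yC) (nbr_comp zC).
Qed.

Lemma TP_free S : free (@path_rel 4) r S -> free (@cycle_rel 4) r S -> TP S.
Proof.
move=> fP fC x y xS yS rxy.
case: (boolP (nbr S x \subset nbr S y)) => [h|/subsetPn [u uNx uNy]]; first by left.
case: (boolP (nbr S y \subset nbr S x)) => [h|/subsetPn [w wNy wNx]]; first by right.
exfalso.
have xNy : x \in nbr S y by rewrite in_nbr xS rsym rxy orbT.
have yNx : y \in nbr S x by rewrite in_nbr yS rxy orbT.
have ux : u != x by apply: contraNneq uNy => ->.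
have uy : u != y by apply: contraNneq uNy => ->; exact: nbr_self.
have wy : w != y by apply: contraNneq wNx => ->.
have wx : w != x by apply: contraNneq wNx => ->; exact: nbr_self.
have uS : u \in S by move: uNx; rewrite in_nbr => /andP[].
have wS : w \in S by move: wNy; rewrite in_nbr => /andP[].
have rxu : r x u by move: uNx; rewrite in_nbr uS (negbTE ux).
have ryw : r y w by move: wNy; rewrite in_nbr wS (negbTE wy).
have nryu : ~~ r y u by move: uNy; rewrite in_nbr uS (negbTE uy).
have nrxw : ~~ r x w by move: wNx; rewrite in_nbr wS (negbTE wx).
have uw : u != w by apply: contraNneq nrxw => <-.
case: (boolP (r u w)) => ruw.
- apply: fC; exists (fun i : 'I_4 => nth u [:: u; x; y; w] i); split.
  + inj_tac.
  + by case=> [[|[|[|[|k]]]] Hk].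
  + edge_tac.
- apply: fP; exists (fun i : 'I_4 => nth u [:: u; x; y; w] i); split.
  + inj_tac.
  + by case=> [[|[|[|[|k]]]] Hk].
  + edge_tac.
Qed.

Lemma desc_nsimpl S x y : x \in S -> y \in S -> r x y -> nbr S y \proper nbr S x ->
  ~~ simplicial r S x.
Proof.
move=> xS yS rxy /properP [_ [z zNx zNy]].
have xNy : x \in nbr S y by rewrite in_nbr xS rsym rxy orbT.
have zx : z != x by apply: contraNneq zNy => ->.
have zS : z \in S by move: zNx; rewrite in_nbr => /andP[].
have rxz : r x z by move: zNx; rewrite in_nbr zS (negbTE zx).
have yz : y != z by apply: contraNneq zNy => <-; exact: nbr_self.
have nryz : ~~ r y z by move: zNy; rewrite in_nbr zS eq_sym (negbTE yz).
apply/negP => /forallP /(_ y) /implyP; rewrite inE yS rxy => /(_ isT).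
move=> /forallP /(_ z) /implyP; rewrite inE zS rxz => /(_ isT) /implyP /(_ yz).
by rewrite (negbTE nryz).
Qed.
End Gen.

Section Main.
Variable V : finType.
Variable e : rel V.
Variables X A : {set V}.
Hypothesis esy : symmetric e.
Hypothesis eirr : irreflexive e.
Hypothesis AX : A = ~: X.
Hypothesis Acl : is_clique e A.
Hypothesis XC : inC e X.
Hypothesis hasA : forall x, x \in X -> exists2 a, a \in A & e x a.
Hypothesis noCom : forall x y, x \in X -> y \in X -> x != y -> ~~ e x y ->
  forall a, a \in A -> ~~ (e x a && e y a).
Hypothesis P6 : P6free e.
Hypothesis chord : chordal e.

Local Notation N := (nbr e X).

Lemma inA v : (v \in A) = (v \notin X).
Proof. by rewrite AX inE. Qed.

Lemma Acl' u v : u \in A -> v \in A -> u != v -> e u v.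
Proof.
move=> uA vA nuv; move/forallP: Acl => /(_ u) /implyP /(_ uA) /forallP /(_ v).
by rewrite vA nuv.
Qed.

Lemma tpX : TP e X.
Proof. by case: XC => p c _; apply: TP_free. Qed.

Lemma neq_e u v : e u v -> u != v.
Proof. by apply: contraTneq => ->; rewrite eirr. Qed.

Lemma e_N u v : v \in X -> u != v -> (v \in N u) = e u v.
Proof. by move=> vX nuv; rewrite in_nbr vX eq_sym (negbTE nuv). Qed.

Definition rep v := odflt v [pick u in X | N u == N v].

Lemma repP v : v \in X -> rep v \in X /\ N (rep v) = N v.
Proof.
move=> vX; rewrite /rep; case: pickP => [u /andP[uX /eqP h]|/(_ v)] /=; first by split.
by rewrite vX eqxx.
Qed.

Lemma rep_eq u v : u \in X -> N u = N v -> rep u = rep v.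
Proof.
move=> uX h; rewrite /rep h; case: pickP => [//|none].
by move: (none u); rewrite uX h eqxx.
Qed.

Lemma rep_idem v : v \in X -> rep (rep v) = rep v.
Proof. by move=> vX; case/repP: (vX) => rX /(rep_eq rX). Qed.

Lemma rep_N u v : u \in X -> v \in X -> (rep u == rep v) = (N u == N v).
Proof.
move=> uX vX; apply/eqP/eqP => h; last exact: rep_eq.
by rewrite -(repP uX).2 -(repP vX).2 h.
Qed.

Lemma N_repr v w : v \in X -> w \in X -> (v \in N w) = (rep v \in N w).
Proof.
move=> vX wX; case: (repP vX) => rX rN.
by rewrite (nbr_sym esy wX vX) (nbr_sym esy wX rX) rN.
Qed.

Lemma twin_e u v : u \in X -> v \in X -> rep u = rep v -> u != v -> e u v.
Proof.
move=> uX vX /eqP; rewrite rep_N // => /eqP h nuv.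
by rewrite -e_N // h nbr_self.
Qed.

Lemma rep_e u v : u \in X -> v \in X -> rep u != rep v -> e u v = e (rep u) (rep v).
Proof.
move=> uX vX nr.
have nuv : u != v by apply: contraNneq nr => ->.
case: (repP uX) => ruX ruN; case: (repP vX) => rvX rvN.
by rewrite -e_N // N_repr // -ruN e_N.
Qed.

Definition R := [set rep v | v in X].
Definition k := #|R|.
Definition idx (i : 'I_k) : V := enum_val i.

Lemma idx_inj : injective idx.
Proof. exact: enum_val_inj. Qed.

Lemma idxR i : idx i \in R.
Proof. exact: enum_valP. Qed.

Lemma idxX i : idx i \in X.
Proof. by case/imsetP: (idxR i) => v vX ->; exact: (repP vX).1. Qed.

Lemma rep_idx i : rep (idx i) = idx i.
Proof. by case/imsetP: (idxR i) => v vX ->; exact: rep_idem. Qed.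

Lemma idx_rep v : v \in X -> exists i, idx i = rep v.
Proof.
move=> vX; have rR : rep v \in R by apply: imset_f.
by exists (enum_rank_in rR (rep v)); exact: enum_rankK_in.
Qed.

Definition ix v : option 'I_k := [pick i | idx i == rep v].

Lemma ixP v : v \in X -> exists2 i, ix v = Some i & idx i = rep v.
Proof.
move=> vX; case: (idx_rep vX) => i hi; rewrite /ix.
case: pickP => [j /eqP hj|/(_ i)]; first by exists j.
by rewrite hi eqxx.
Qed.

Definition dp v : option V :=
  match [pick u in X | e v u] with
  | Some u0 => Some [arg min_(u < u0 | (u \in X) && e v u) #|N u|]
  | None => None
  end.

Lemma dpP v : v \in A -> (dp v = None /\ forall u, u \in X -> ~~ e v u) \/
  exists w, [/\ dp v = Some w, w \in X, e v w &
                forall u, u \in X -> e v u -> N w \subset N u].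
Proof.
move=> vA; rewrite /dp; case: pickP => [u0 /andP[u0X evu0]|none]; last first.
  by left; split=> // u uX; move: (none u); rewrite uX /= => ->.
right; case: arg_minnP => [|w /andP[wX evw] wmin]; first by rewrite u0X.
exists w; split=> // u uX evu.
have hcard : #|N w| <= #|N u| by apply: wmin; rewrite uX evu.
case: (eqVneq u w) => [->|uw]; first exact: subxx.
have ewu : e w u.
  apply/negPn/negP => newu.
  have wu : w != u by rewrite eq_sym.
  have := noCom wX uX wu newu vA.
  by rewrite (esy w v) (esy u v) evw evu.
case: (tpX wX uX ewu) => // sub.
case: (boolP (N w \subset N u)) => // nsub; exfalso.
have : N u \proper N w by rewrite properE sub nsub.
by move/proper_card; rewrite ltnNge hcard.
Qed.

Local Notation W := (option (bool * 'I_k)).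

Definition anc (i j : 'I_k) : bool := e (idx i) (idx j) && (N (idx j) \proper N (idx i)).

Definition eH (a b : W) : bool :=
  match a, b with
  | Some (true, i), Some (true, j) => (i != j) && e (idx i) (idx j)
  | Some (true, i), Some (false, j) => (i == j) || anc i j
  | Some (false, i), Some (true, j) => (j == i) || anc j i
  | Some (false, i), Some (false, j) => i != j
  | Some (false, _), None => true
  | None, Some (false, _) => true
  | _, _ => false
  end.

Definition xs (i : 'I_k) : W := Some (true, i).
Definition as_ (i : 'I_k) : W := Some (false, i).
Definition XH : {set W} := [set xs i | i : 'I_k].
Definition AH : {set W} := None |: [set as_ i | i : 'I_k].

Definition q (v : V) : W :=
  if v \in X then omap (fun i => (true, i)) (ix v)
  else match dp v with Some w => omap (fun i => (false, i)) (ix w) | None => None end.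

Lemma qX v : v \in X -> exists2 i, q v = xs i & idx i = rep v.
Proof. by move=> vX; rewrite /q vX; case: (ixP vX) => i -> h; exists i. Qed.

Lemma qA v : v \in A -> (q v = None /\ forall u, u \in X -> ~~ e v u) \/
  exists i w, [/\ q v = as_ i, idx i = rep w, w \in X, e v w &
                forall u, u \in X -> e v u -> N w \subset N u].
Proof.
move=> vA; have vX : v \notin X by rewrite -inA.
rewrite /q (negbTE vX); case: (dpP vA) => [[-> h]|[w [-> wX evw wmin]]].
  by left.
by right; case: (ixP wX) => i -> hi; exists i, w.
Qed.

Definition I : {set 'I_k} :=
  [set j | [exists a, [exists u, [&& q a == as_ j, u \in X, rep u == idx j & ~~ e a u]]]].

Lemma eH_sym : symmetric eH.
Proof.
move=> [[[] i]|] [[[] j]|] //=; by rewrite (eq_sym i j) ?(esy (idx i)).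
Qed.

Lemma eH_irr : irreflexive eH.
Proof. by move=> [[[] i]|] /=; rewrite ?eqxx ?eirr. Qed.


Lemma xs_inj : injective xs. Proof. by move=> i j []. Qed.
Lemma as_inj : injective as_. Proof. by move=> i j []. Qed.
Lemma xsXH i : xs i \in XH. Proof. by apply/imsetP; exists i. Qed.

Lemma memAH b : (b \in AH) = (if b is Some (true, _) then false else true).
Proof.
rewrite /AH in_setU1; case: b => [[[] l]|] //=.
  by apply/imsetP => [[j _]].
by apply/imsetP; exists l.
Qed.

Lemma eH_xs i j : eH (xs i) (xs j) = e (idx i) (idx j).
Proof. by rewrite /=; case: eqVneq => [->|//]; rewrite eirr. Qed.

Lemma nbrH_xs a l : (xs l \in nbr eH XH (xs a)) = (idx l \in N (idx a)).
Proof. by rewrite !in_nbr xsXH idxX eH_xs (inj_eq xs_inj) (inj_eq idx_inj). Qed.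

Lemma subN a b : (N (idx a) \subset N (idx b)) =
  [forall l, (idx l \in N (idx a)) ==> (idx l \in N (idx b))].
Proof.
apply/subsetP/forallP => h.
  by move=> l; apply/implyP; exact: h.
move=> v vN; have vX := subsetP (nbr_sub _ _ _) _ vN.
case: (idx_rep vX) => l hl.
move: vN; rewrite !(N_repr vX) ?idxX // -hl.
by move/implyP: (h l).
Qed.

Lemma subH a b : (nbr eH XH (xs a) \subset nbr eH XH (xs b)) =
  [forall l, (idx l \in N (idx a)) ==> (idx l \in N (idx b))].
Proof.
apply/subsetP/forallP => h.
  by move=> l; apply/implyP; rewrite -!nbrH_xs; exact: h.
move=> w wN; have := subsetP (nbr_sub _ _ _) _ wN.
case/imsetP => l _ wE; move: wN; rewrite wE !nbrH_xs.
by move/implyP: (h l).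
Qed.

Lemma subNH a b : (nbr eH XH (xs a) \subset nbr eH XH (xs b)) = (N (idx a) \subset N (idx b)).
Proof. by rewrite subH subN. Qed.

Lemma properNH a b : (nbr eH XH (xs a) \proper nbr eH XH (xs b)) = (N (idx a) \proper N (idx b)).
Proof. by rewrite !properE !subNH. Qed.

Lemma free_H n (F : rel 'I_n) : free F e X -> free F eH XH.
Proof.
move=> fr [f [finj fX fE]]; apply: fr.
have : forall i, exists j, f i = xs j.
  by move=> i; case/imsetP: (fX i) => j _ ->; exists j.
case/fin_all_exists => g hg.
exists (fun i => idx (g i)); split.
- by move=> a b /idx_inj h; apply: finj; rewrite !hg h.
- by move=> i; exact: idxX.
- by move=> a b; rewrite -eH_xs -!hg fE.
Qed.

Lemma inC_H : inC eH XH.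
Proof. by case: XC => a b c; split; exact: free_H. Qed.

Lemma tpH : TP eH XH.
Proof. case: inC_H => a b _; exact (TP_free eH_sym eH_irr a b). Qed.

Lemma tdescH i j : tdesc eH XH (xs i) (xs j) = anc i j.
Proof. by rewrite (tdescE eH_sym _ _ tpH) !xsXH eH_xs properNH. Qed.

Lemma anc_trans i j l : anc i j -> anc j l -> anc i l.
Proof.
case/andP => eij pij /andP[ejl pjl]; rewrite /anc (proper_trans pjl pij) andbT.
have : idx l \in N (idx i).
  apply: (subsetP (proper_sub pij)); apply: (subsetP (proper_sub pjl)).
  exact: nbr_self (idxX l).
rewrite in_nbr idxX /= => /orP[/eqP li|//].
by move: (proper_trans pjl pij); rewrite li properE subxx.
Qed.

Lemma anc_nsimpl i j : anc i j -> ~~ simplicial eH XH (xs i).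
Proof.
rewrite -tdescH (tdescE eH_sym _ _ tpH) => /and4P[a b c d].
exact (desc_nsimpl eH_sym a b c d).
Qed.

Lemma tnodeH i : tnode eH XH (xs i) = [set xs i].
Proof.
apply: (tnode_f1 eH_sym) => //; [exact: tpH | exact: xsXH |].
move=> y z /imsetP[a _ ->] /imsetP[b _ ->] h.
have : N (idx a) = N (idx b) by apply/eqP; rewrite eqEsubset -!subNH h !subxx.
by move/(rep_eq (idxX a)); rewrite !rep_idx => /idx_inj ->.
Qed.

Lemma inNA j b : (b \in [set b in AH | eH (xs j) b]) =
  (if b is Some (false, l) then (j == l) || anc j l else false).
Proof. by rewrite inE memAH; case: b => [[[] l]|]. Qed.

Lemma formula i : [set b in AH | eH (xs i) b] =
  if simplicial eH XH (xs i) then [set as_ i]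
  else as_ i |: \bigcup_(j | tdesc eH XH (xs i) (xs j)) [set b in AH | eH (xs j) b].
Proof.
apply/setP => b; rewrite inNA; case: ifP => simp.
  rewrite in_set1; case: b => [[[] l]|] //.
  rewrite (inj_eq as_inj) eq_sym; case: (boolP (anc i l)) => h; last by rewrite orbF.
  by rewrite (negbTE (anc_nsimpl h)) in simp.
rewrite in_setU1; case: b => [[[] l]|].
- apply/esym/negP => /orP[//|/bigcupP [j _]]; by rewrite inNA.
- rewrite (inj_eq as_inj) eq_sym; apply/idP/idP.
    case/orP => [->//|h]; apply/orP; right; apply/bigcupP; exists l.
      by rewrite tdescH.
    by rewrite inNA eqxx.
  case/orP => [->//|/bigcupP [j]]; rewrite tdescH inNA => aij /orP[/eqP <-|ajl].
    by rewrite aij orbT.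
  by rewrite (anc_trans aij ajl) orbT.
- apply/esym/negP => /orP[//|/bigcupP [j _]]; by rewrite inNA.
Qed.


Lemma XA_neq u v : u \in X -> v \in A -> u != v.
Proof. by move=> uX; rewrite inA; apply: contraNneq => <-. Qed.

Lemma claimA v w u : v \in A -> w \in X -> e v w ->
  (forall u', u' \in X -> e v u' -> N w \subset N u') ->
  u \in X -> e u w -> N w \proper N u -> e v u.
Proof.
move=> vA wX evw wmin uX euw pr.
apply/negPn/negP => nevu.
case/properP: pr => _ [z zNu zNw].
have zX : z \in X := subsetP (nbr_sub _ _ _) _ zNu.
have zu : z != u.
  apply: contraNneq zNw => ->; by rewrite in_nbr uX esy euw orbT.
have euz : e u z by move: zNu; rewrite in_nbr zX (negbTE zu).
have zw : z != w by apply: contraNneq zNw => ->; exact: nbr_self wX.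
have wz : w != z by rewrite eq_sym.
have newz : ~~ e w z by move: zNw; rewrite in_nbr zX (negbTE zw).
have nevz : ~~ e v z.
  apply/negP => evz; move: (subsetP (wmin z zX evz) w (nbr_self _ wX)).
  by rewrite in_nbr wX (negbTE wz) esy (negbTE newz).
case: (hasA zX) => b bA ezb.
have bv : b != v by apply: contraNneq nevz => <-; rewrite esy.
have evb : e v b by apply: Acl' => //; rewrite eq_sym.
have newb : ~~ e w b by have := noCom wX zX wz newz bA; rewrite ezb andbT.
have wv := XA_neq wX vA. have uv := XA_neq uX vA. have zv := XA_neq zX vA.
have wb := XA_neq wX bA. have ub := XA_neq uX bA. have zb := XA_neq zX bA.
case: (boolP (e u b)) => eub.
- apply: (chord (leqnn 4)).
  exists (fun i : 'I_4 => nth v [:: v; w; u; b] i); split.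
  + inj_tac.
  + by move=> i; rewrite inE.
  + edge_tac.
- apply: (chord (n := 5) isT).
  exists (fun i : 'I_5 => nth v [:: v; w; u; z; b] i); split.
  + inj_tac.
  + by move=> i; rewrite inE.
  + edge_tac.
Qed.

Lemma cross w w' s t : s \in X -> t \in X -> w \in X -> w' \in X ->
  rep s = rep w -> rep t = rep w' -> rep w != rep w' -> ~~ e w w' -> ~~ e s t.
Proof.
move=> sX tX wX w'X hs ht nr new.
rewrite rep_e ?hs ?ht //.
by rewrite -rep_e.
Qed.

Lemma claimB a b p p' w w' : a \in A -> b \in A -> a != b ->
  p \in X -> p' \in X -> w \in X -> w' \in X ->
  rep p = rep w -> rep p' = rep w' -> rep w != rep w' -> ~~ e w w' ->
  e a w -> e b w' -> ~~ e a p -> ~~ e b p' -> False.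
Proof.
move=> aA bA ab pX p'X wX w'X hp hp' nr new eaw ebw' nap nbp'.
have npp' : ~~ e p p' := cross pX p'X wX w'X hp hp' nr new.
have npw' : ~~ e p w' := cross pX w'X wX w'X hp erefl nr new.
have nwp' : ~~ e w p' := cross wX p'X wX w'X erefl hp' nr new.
have pw : p != w by apply: contraNneq nap => ->.
have epw : e p w := twin_e pX wX hp pw.
have p'w' : p' != w'.
  apply: contraNneq nbp' => ->; by rewrite ebw'.
have ep'w' : e p' w' := twin_e p'X w'X hp' p'w'.
have eab : e a b := Acl' aA bA ab.
have ww' : w != w' by apply: contraNneq nr => ->.
have pw'' : p != w' by apply: contraNneq nr => <-; rewrite hp.
have wp' : w != p' by apply: contraNneq nr => ->; rewrite hp'.
have pp' : p != p' by apply: contraNneq nr => E; rewrite -hp -hp' E.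
have nbw : ~~ e b w.
  by have := noCom wX w'X ww' new bA; rewrite (esy w' b) ebw' andbT esy.
have naw' : ~~ e a w'.
  by have := noCom wX w'X ww' new aA; rewrite (esy w a) eaw /= esy.
have nbp : ~~ e b p.
  by have := noCom pX w'X pw'' npw' bA; rewrite (esy w' b) ebw' andbT esy.
have nap' : ~~ e a p'.
  by have := noCom wX p'X wp' nwp' aA; rewrite (esy w a) eaw /= esy.
have pa := XA_neq pX aA. have pb := XA_neq pX bA.
have wa := XA_neq wX aA. have wb := XA_neq wX bA.
have w'a := XA_neq w'X aA. have w'b := XA_neq w'X bA.
have p'a := XA_neq p'X aA. have p'b := XA_neq p'X bA.
apply: P6.
exists (fun i : 'I_6 => nth p [:: p; w; a; b; w'; p'] i); split.
+ inj_tac.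
+ by move=> i; rewrite inE.
+ edge_tac.
Qed.

Lemma q_notA v : v \in X -> forall i, q v != as_ i.
Proof. by move=> vX i; case: (qX vX) => l -> _. Qed.

Lemma accI : acceptable eH xs I.
Proof.
rewrite /acceptable; apply/forallP => u; apply/implyP => /imsetP [i iI ->].
apply/forallP => v; apply/implyP => /imsetP [j jI ->]; apply/implyP => nij.
rewrite eH_xs; have ij : i != j by apply: contraNneq nij => ->.
apply/negPn/negP => neij.
move: iI jI; rewrite !inE => /existsP [a /existsP [p /and4P [qa pX rp nap]]].
move=> /existsP [b /existsP [p' /and4P[qb p'X rp' nbp']]].
have aA : a \in A.
  rewrite inA; apply/negP => aX; by rewrite (negbTE (q_notA aX i)) in qa.
have bA : b \in A.
  rewrite inA; apply/negP => bX; by rewrite (negbTE (q_notA bX j)) in qb.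
case: (qA aA) => [[qN _]|[i' [w [qw hw wX eaw _]]]]; first by rewrite qN in qa.
case: (qA bA) => [[qN _]|[j' [w' [qw' hw' w'X ebw' _]]]]; first by rewrite qN in qb.
have ii' : i' = i by apply: as_inj; rewrite -qw; apply/eqP.
subst i'.
have jj' : j' = j by apply: as_inj; rewrite -qw'; apply/eqP.
subst j'.
have ab : a != b.
  apply: contraNneq ij => abE; apply/eqP; apply: as_inj; by rewrite -qw -qw' abE.
have nr : rep w != rep w' by rewrite -hw -hw' (inj_eq idx_inj).
apply: (claimB aA bA ab pX p'X wX w'X _ _ nr _ eaw ebw' nap nbp').
- by rewrite -hw; apply/eqP.
- by rewrite -hw'; apply/eqP.
- by rewrite rep_e // -hw -hw'.
Qed.

Lemma M_xa i j : match_rel xs as_ I (xs i) (as_ j) = (i == j) && (i \in I).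
Proof.
apply/existsP/andP => [[l /andP[lI /orP[/andP[/eqP [->] /eqP [->]]|/andP[/eqP //]]]]|].
  by rewrite eqxx.
by case=> /eqP -> iI; exists j; rewrite iI !eqxx.
Qed.

Lemma M_sym : symmetric (match_rel xs as_ I).
Proof. by move=> x y; apply: eq_existsb => l; rewrite orbC. Qed.

Lemma aug1 u v : u != v -> q u = q v -> e u v.
Proof.
move=> uv; case: (boolP (u \in X)) => uX; case: (boolP (v \in X)) => vX.
- case: (qX uX) => i -> hi; case: (qX vX) => j -> hj /xs_inj ij; subst j.
  by apply: twin_e => //; rewrite -hi -hj.
- have vA : v \in A by rewrite inA.
  case: (qX uX) => i -> _; case: (qA vA) => [[-> _]|[j [w [-> _ _ _ _]]]] //.
- have uA : u \in A by rewrite inA.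
  case: (qX vX) => i -> _; case: (qA uA) => [[-> _]|[j [w [-> _ _ _ _]]]] //.
- by move=> _; apply: Acl' => //; rewrite inA.
Qed.

Lemma aug2_xa u v : u \in X -> v \in A -> eH (q u) (q v) ->
  ~~ match_rel xs as_ I (q u) (q v) -> e u v.
Proof.
move=> uX vA; case: (qX uX) => i qu hi; rewrite qu.
case: (qA vA) => [[-> _] //|[j [w [qv hw wX evw wmin]]]].
rewrite qv M_xa /= => H1 H2.
case/orP: H1 => [/eqP ij|aij].
- subst j; move: H2; rewrite eqxx /= => niI.
  apply/negPn/negP => neuv; apply: (negP niI).
  rewrite inE; apply/existsP; exists v; apply/existsP; exists u.
  by rewrite qv eqxx uX -hi eqxx /= esy.
- rewrite esy; apply: (claimA vA wX evw wmin uX).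
  + have ij : i != j.
      by apply: contraTneq aij => ->; rewrite /anc properE subxx andbF.
    rewrite rep_e //; last by rewrite -hi -hw (inj_eq idx_inj).
    by rewrite -hi -hw; case/andP: aij.
  + rewrite -(repP uX).2 -(repP wX).2 -hi -hw; by case/andP: aij.
Qed.

Lemma aug3_xa u v : u \in X -> v \in A -> q u != q v -> ~~ eH (q u) (q v) -> ~~ e u v.
Proof.
move=> uX vA; case: (qX uX) => i qu hi; rewrite qu.
case: (qA vA) => [[-> h] _ _|[j [w [qv hw wX evw wmin]]]].
  by rewrite esy h.
rewrite qv /= negb_or => _ /andP[nij naij].
apply/negP => euv.
have sub := wmin u uX (eq_ind _ _ euv _ (esy u v)).
have nuw : rep u != rep w by rewrite -hi -hw (inj_eq idx_inj).
have uw : u != w by apply: contraNneq nuw => ->.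
have euw : e u w.
  apply/negPn/negP => neuw; have := noCom uX wX uw neuw vA.
  by rewrite euv (esy w v) evw.
have pr : N w \proper N u.
  rewrite properEneq sub andbT eq_sym -rep_N //.
apply: (negP naij); rewrite /anc hi hw -rep_e // euw /=.
by rewrite (repP uX).2 (repP wX).2.
Qed.

Lemma qAH v : v \in A -> q v = None \/ exists i, q v = as_ i.
Proof.
by move=> vA; case: (qA vA) => [[-> _]|[i [w [-> _ _ _ _]]]]; [left | right; exists i].
Qed.

Lemma graded_cl (P Rr : {set V}) :
  (forall p p', p \in P -> p' \in P -> p != p' -> e p p') ->
  (forall r r', r \in Rr -> r' \in Rr -> r != r' -> e r r') ->
  (forall p r, p \in P -> r \in Rr -> p != r) -> graded e P Rr.
Proof.
move=> Pcl Rcl dis p p' pP p'P.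
case: (eqVneq p p') => [->|pp']; first by left.
case: (boolP ([set r in Rr | e p r] \subset [set r in Rr | e p' r])) => [h|/subsetPn [x xp xp']].
  by left.
right; apply/subsetP => y yp'; apply/negPn/negP => yp; exfalso.
rewrite !inE in xp xp' yp' yp.
case/andP: xp => xR epx; case/andP: yp' => yR ep'y.
rewrite xR /= in xp'; rewrite yR /= in yp.
have xy : x != y by apply: contraNneq yp => <-.
have exy := Rcl x y xR yR xy.
have epp' := Pcl p p' pP p'P pp'.
have px := dis p x pP xR. have py := dis p y pP yR.
have p'x := dis p' x p'P xR. have p'y := dis p' y p'P yR.
apply: (chord (leqnn 4)).
exists (fun i : 'I_4 => nth p [:: p; x; y; p'] i); split.
+ inj_tac.
+ by move=> i; rewrite inE.
+ edge_tac.
Qed.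

Lemma augH : augmentation e eH (match_rel xs as_ I) q.
Proof.
split.
- exact: aug1.
- move=> u v nq ehq nm.
  case: (boolP (u \in X)) => uX; case: (boolP (v \in X)) => vX.
  + move: nq ehq; case: (qX uX) => i -> hi; case: (qX vX) => j -> hj nq.
    have ij : i != j by apply: contraNneq nq => ->.
    have nr : rep u != rep v by rewrite -hi -hj (inj_eq idx_inj).
    by rewrite eH_xs (rep_e uX vX nr) -hi -hj.
  + by apply aug2_xa => //; rewrite inA.
  + rewrite esy; apply aug2_xa => //; first by rewrite inA.
      by rewrite eH_sym.
    by rewrite M_sym.
  + by apply: Acl'; rewrite ?inA //; apply: contraNneq nq => ->.
- move=> u v nq nehq.
  case: (boolP (u \in X)) => uX; case: (boolP (v \in X)) => vX.
  + move: nq nehq; case: (qX uX) => i -> hi; case: (qX vX) => j -> hj nq.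
    have ij : i != j by apply: contraNneq nq => ->.
    have nr : rep u != rep v by rewrite -hi -hj (inj_eq idx_inj).
    by rewrite eH_xs (rep_e uX vX nr) -hi -hj.
  + by apply aug3_xa => //; rewrite inA.
  + rewrite esy; apply aug3_xa => //; first by rewrite inA.
      by rewrite eq_sym.
    by rewrite eH_sym.
  + have uA : u \in A by rewrite inA.
    have vA : v \in A by rewrite inA.
    move: nq nehq.
    case: (qAH uA) => [->|[i ->]]; case: (qAH vA) => [->|[j ->]] //=.
    by move=> nq; rewrite (inj_eq as_inj) in nq; rewrite nq.
- move=> u' v' /existsP [l /andP[lI /orP[/andP[/eqP-> /eqP->]|/andP[/eqP-> /eqP->]]]];
    apply graded_cl.
  + by move=> p p'; rewrite !inE => /eqP h /eqP h' pp'; apply: aug1; rewrite // h h'.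
  + by move=> p p'; rewrite !inE => /eqP h /eqP h' pp'; apply: aug1; rewrite // h h'.
  + by move=> p r; rewrite !inE => /eqP h /eqP h'; apply: contraTneq isT => pr; move: h; rewrite pr h'.
  + by move=> p p'; rewrite !inE => /eqP h /eqP h' pp'; apply: aug1; rewrite // h h'.
  + by move=> p p'; rewrite !inE => /eqP h /eqP h' pp'; apply: aug1; rewrite // h h'.
  + by move=> p r; rewrite !inE => /eqP h /eqP h'; apply: contraTneq isT => pr; move: h; rewrite pr h'.
Qed.


Lemma main_exists : exists (W : finType) (eH' : rel W) (k' : nat) (xs' : 'I_k' -> W) (a0 : W)
         (as' : 'I_k' -> W) (I' : {set 'I_k'}) (q' : V -> W),
    [/\ basic_C_pair eH' xs' a0 as',
        acceptable eH' xs' I' &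
        augmentation e eH' (match_rel xs' as' I') q'].
Proof.
exists (option (bool * 'I_k) : finType), eH, k, xs, None, as_, I, q.
split.
- split.
  + split; first by split; [exact eH_sym | exact eH_irr].
    move=> w; rewrite in_setU; case: w => [[[] i]|].
    * by rewrite xsXH.
    * by apply/orP; right; rewrite memAH.
    * by apply/orP; right; rewrite memAH.
  + by split; [exact xs_inj | exact as_inj | | |].
  + split; first exact inC_H.
    by move=> x /imsetP[i _ ->]; rewrite tnodeH cards1.
  + apply/forallP => a; apply/implyP; rewrite memAH => ha.
    apply/forallP => b; apply/implyP; rewrite memAH => hb; apply/implyP.
    by case: a ha => [[[] i]|] // _; case: b hb => [[[] j]|].
  + exact formula.
- exact accI.
- exact augH.
Qed.

End Main.

Theorem theorem2p6 (V : finType) (e : rel V) (X A : {set V}) :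
  is_graph e -> C_pair e X A ->
  exists (W : finType) (eH : rel W) (k : nat) (xs : 'I_k -> W) (a0 : W)
         (as_ : 'I_k -> W) (I : {set 'I_k}) (q : V -> W),
    [/\ basic_C_pair eH xs a0 as_,
        acceptable eH xs I &
        augmentation e eH (match_rel xs as_ I) q].
Proof.
move=> [esy eirr] [[AX Acl XC] hasA noCom P6 chord].
apply (main_exists (X := X) (A := A)); assumption.
Qed.
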